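(* Suppose $c_1\ge-1$, $c_2\ge-1$, $c_3>\bar c_3(c_1,c_2)$. Then any $C^1$ solution $U$ of $(1-x^2)U'+2xU+\frac12U^2=P_c(x)$ in $(-1,1)$ other than $U^+$ and $U^-$ satisfies $U^-<U<U^+$ in $(-1,1)$, $U(-1)=\tau_1(c_1)$ and $U(1)=\tau_2'(c_2)$.
   Context: $P_c(x):=c_1(1-x)+c_2(1+x)+c_3(1-x^2)$; $\bar c_3(c_1,c_2):=-\frac12(\sqrt{1+c_1}+\sqrt{1+c_2})(\sqrt{1+c_1}+\sqrt{1+c_2}+2)$; $\tau_1(c_1):=2-2\sqrt{1+c_1}$, $\tau_2(c_1):=2+2\sqrt{1+c_1}$, $\tau_1'(c_2):=-2-2\sqrt{1+c_2}$, $\tau_2'(c_2):=-2+2\sqrt{1+c_2}$. $U^+$ denotes the solution on $(-1,1)$ which near $x=-1$ is given by a convergent power series $\tau_2(c_1)+\sum_{n\ge1}a_n(1+x)^n$, and $U^-$ the solution on $(-1,1)$ which near $x=1$ is given by a convergent power series $\tau_1'(c_2)+\sum_{n\ge1}b_n(1-x)^n$ (both exist on all of $(-1,1)$ under the hypotheses). $U(\pm1)$ denote one-sided limits. *)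

(* Defs.v *)
From Stdlib Require Import Reals Lra.
From Coquelicot Require Import Coquelicot.
Open Scope R_scope.

Definition Pc (c1 c2 c3 x : R) : R :=
  c1 * (1 - x) + c2 * (1 + x) + c3 * (1 - x ^ 2).

Definition c3bar (c1 c2 : R) : R :=
  - / 2 * (sqrt (1 + c1) + sqrt (1 + c2)) * (sqrt (1 + c1) + sqrt (1 + c2) + 2).

Definition tau1 (c1 : R) : R := 2 - 2 * sqrt (1 + c1).
Definition tau2 (c1 : R) : R := 2 + 2 * sqrt (1 + c1).
Definition tau1' (c2 : R) : R := -2 - 2 * sqrt (1 + c2).
Definition tau2' (c2 : R) : R := -2 + 2 * sqrt (1 + c2).

Definition is_C1_sol (c1 c2 c3 : R) (U : R -> R) : Prop :=
  forall x, -1 < x < 1 ->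
    ex_derive U x /\ continuous (Derive U) x /\
    (1 - x ^ 2) * Derive U x + 2 * x * U x + / 2 * (U x) ^ 2 = Pc c1 c2 c3 x.

Definition is_Uplus (c1 c2 c3 : R) (U : R -> R) : Prop :=
  is_C1_sol c1 c2 c3 U /\
  exists (d : R) (a : nat -> R), 0 < d /\ a O = tau2 c1 /\
    forall x, -1 < x < -1 + d -> is_pseries a (1 + x) (U x).

Definition is_Uminus (c1 c2 c3 : R) (U : R -> R) : Prop :=
  is_C1_sol c1 c2 c3 U /\
  exists (d : R) (b : nat -> R), 0 < d /\ b O = tau1' c2 /\
    forall x, 1 - d < x < 1 -> is_pseries b (1 - x) (U x).

(* Main.v *)
Require Import Defs.
From Stdlib Require Import Reals Lra Lia Classical.
From Coquelicot Require Import Coquelicot.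
Open Scope R_scope.


Lemma der_cont f x l : is_derive f x l -> continuity_pt f x.
Proof.
  intros H. apply continuity_pt_filterlim.
  apply (ex_derive_continuous f x). exists l; exact H.
Qed.

Lemma cont_eps f z : continuity_pt f z ->
  forall eps, 0 < eps -> exists d, 0 < d /\ forall w, Rabs (w - z) < d -> Rabs (f w - f z) < eps.
Proof.
  intros H eps Heps.
  apply continuity_pt_filterlim in H.
  destruct (proj1 (filterlim_locally f (f z)) H (mkposreal eps Heps)) as [d Hd].
  exists d. split. apply cond_pos. intros w Hw. apply (Hd w). exact Hw.
Qed.

Lemma mono_le f df a b : a < b ->
  (forall x, a <= x <= b -> is_derive f x (df x)) ->
  (forall x, a <= x <= b -> 0 <= df x) -> f a <= f b.
Proof.
  intros Hab Hd Hp.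
  destruct (MVT_gen f a b df) as [c [Hc Heq]].
  - intros x Hx. apply Hd. rewrite Rmin_left in Hx by lra. rewrite Rmax_right in Hx by lra. lra.
  - intros x Hx. apply (der_cont f x (df x)). apply Hd.
    rewrite Rmin_left in Hx by lra. rewrite Rmax_right in Hx by lra. lra.
  - rewrite Rmin_left in Hc by lra. rewrite Rmax_right in Hc by lra.
    assert (0 <= df c) by (apply Hp; lra). nra.
Qed.

Lemma deriv_neg_right f z l : is_derive f z l -> l < 0 ->
  exists e, 0 < e /\ forall w, z < w < z + e -> f w < f z.
Proof.
  intros H Hl. apply is_derive_Reals in H.
  destruct (H (- l / 2)) as [d Hd]. lra.
  exists d. split. apply cond_pos. intros w Hw.
  assert (Hh : w - z <> 0) by lra.
  assert (Hh2 : Rabs (w - z) < d) by (rewrite Rabs_right; lra).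
  specialize (Hd (w - z) Hh Hh2).
  replace (z + (w - z)) with w in Hd by ring.
  set (q := (f w - f z) / (w - z)) in Hd.
  assert (Hq : f w - f z = q * (w - z)) by (unfold q; field; lra).
  apply Rabs_def2 in Hd. nra.
Qed.

Lemma barrier f df a x1 L : a < x1 ->
  (forall y, a < y <= x1 -> is_derive f y (df y)) -> L < f x1 ->
  (forall y, a < y <= x1 -> f y = L -> df y < 0) ->
  forall y, a < y <= x1 -> L < f y.
Proof.
  intros Hax Hd HL Hs y Hy.
  destruct (Rlt_or_le L (f y)) as [H|H]; [exact H|exfalso].
  set (E := fun z => y <= z <= x1 /\ f z <= L).
  assert (Hb : bound E) by (exists x1; intros z [Hz _]; lra).
  assert (Hne : exists z, E z) by (exists y; split; [lra|exact H]).
  destruct (completeness E Hb Hne) as [z [Hub Hlub]].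
  assert (Hyz : y <= z) by (apply Hub; split; [lra|exact H]).
  assert (Hzx : z <= x1) by (apply Hlub; intros w [Hw _]; lra).
  assert (Hc : continuity_pt f z) by (apply (der_cont f z (df z)); apply Hd; lra).
  assert (C1 : f z <= L).
  { destruct (Rle_or_lt (f z) L) as [h|h]; [exact h|exfalso].
    destruct (cont_eps f z Hc (f z - L)) as [d [Hd0 Hd1]]; [lra|].
    destruct (classic (exists w, E w /\ z - d < w)) as [[w [[Hw1 Hw2] Hw3]]|Hn].
    - assert (w <= z) by (apply Hub; split; assumption).
      assert (Rabs (w - z) < d) by (rewrite Rabs_left1; lra).
      specialize (Hd1 w H1). apply Rabs_def2 in Hd1. lra.
    - assert (z <= z - d). { apply Hlub. intros w Hw. destruct (Rle_or_lt w (z - d)); auto.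
        exfalso; apply Hn; exists w; auto. } lra. }
  assert (C2 : z < x1) by (destruct (Req_dec z x1); [subst; lra|lra]).
  assert (C3 : forall w, z < w <= x1 -> L < f w).
  { intros w Hw. destruct (Rlt_or_le L (f w)) as [h|h]; auto.
    assert (w <= z) by (apply Hub; split; [lra|exact h]). lra. }
  assert (C4 : L <= f z).
  { destruct (Rle_or_lt L (f z)) as [h|h]; [exact h|exfalso].
    destruct (cont_eps f z Hc (L - f z)) as [d [Hd0 Hd1]]; [lra|].
    set (w := Rmin (z + d/2) x1).
    assert (z < w <= x1) by (unfold w; apply Rmin_case_strong; lra).
    assert (Rabs (w - z) < d) by (unfold w; apply Rmin_case_strong; intros; rewrite Rabs_right; lra).
    specialize (Hd1 w H1). apply Rabs_def2 in Hd1. specialize (C3 w H0). lra. }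
  assert (Hfz : f z = L) by lra.
  destruct (deriv_neg_right f z (df z)) as [e [He Hw]].
  apply Hd; lra. apply Hs; [lra|exact Hfz].
  set (w := Rmin (z + e/2) x1).
  assert (z < w <= x1) by (unfold w; apply Rmin_case_strong; lra).
  assert (f w < f z) by (apply Hw; unfold w; apply Rmin_case_strong; lra).
  specialize (C3 w H0). lra.
Qed.

Lemma barrier_below f df a x1 L : a < x1 ->
  (forall y, a < y <= x1 -> is_derive f y (df y)) -> f x1 < L ->
  (forall y, a < y <= x1 -> f y = L -> 0 < df y) ->
  forall y, a < y <= x1 -> f y < L.
Proof.
  intros Hax Hd HL Hs y Hy.
  assert (- L < - f y); [|lra].
  apply (barrier (fun t => - f t) (fun t => - df t) a x1 (-L)); auto.
  - intros t Ht. apply (is_derive_opp f t (df t)). auto.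
  - intros t Ht Heq. assert (0 < df t) by (apply Hs; auto; lra). lra.
Qed.

Lemma div_down f df x0 c : -1 < x0 -> 0 < c ->
  (forall y, -1 < y <= x0 -> is_derive f y (df y)) ->
  (forall y, -1 < y <= x0 -> c / (1 + y) <= df y) ->
  forall B, exists y, -1 < y < x0 /\ f y < B.
Proof.
  intros Hx0 Hc Hd Hle B.
  set (G := fun y => f y - c * ln (1 + y)).
  assert (HG : forall y, -1 < y <= x0 -> G y <= G x0).
  { intros y Hy. destruct (Req_dec y x0) as [->|Hne]; [lra|].
    apply (mono_le G (fun t => df t - c / (1 + t))); [lra| |].
    - intros t Ht. unfold G.
      apply (is_derive_minus f (fun t => c * ln (1 + t))). apply Hd; lra.
      auto_derive. lra. field. lra.
    - intros t Ht. specialize (Hle t ltac:(lra)). lra. }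
  set (t := Rmin ((1 + x0)/2) (exp ((B - 1 - G x0) / c))).
  assert (Ht0 : 0 < t) by (unfold t; apply Rmin_case_strong; intros; [lra|apply exp_pos]).
  assert (Ht1 : t < 1 + x0) by (unfold t; apply Rmin_case_strong; lra).
  assert (Ht2 : ln t <= (B - 1 - G x0) / c).
  { rewrite <- (ln_exp ((B - 1 - G x0) / c)). unfold t at 1.
    apply Rmin_case_strong; intros h; [|lra].
    destruct h as [h|h]. left. apply ln_increasing; lra. rewrite h. lra. }
  exists (-1 + t). split; [lra|].
  specialize (HG (-1 + t) ltac:(lra)). unfold G in HG.
  replace (1 + (-1 + t)) with t in HG by ring.
  assert (c * ln t <= B - 1 - G x0).
  { apply (Rmult_le_compat_l c) in Ht2; [|lra].
    replace (c * ((B - 1 - G x0) / c)) with (B - 1 - G x0) in Ht2 by (field; lra). exact Ht2. }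
  unfold G in H. lra.
Qed.

Lemma div_up f df x0 c : -1 < x0 -> 0 < c ->
  (forall y, -1 < y <= x0 -> is_derive f y (df y)) ->
  (forall y, -1 < y <= x0 -> df y <= - c / (1 + y)) ->
  forall B, exists y, -1 < y < x0 /\ B < f y.
Proof.
  intros Hx0 Hc Hd Hle B.
  destruct (div_down (fun t => - f t) (fun t => - df t) x0 c Hx0 Hc) with (B := - B) as [y [Hy1 Hy2]].
  - intros y Hy. apply (is_derive_opp f y (df y)). auto.
  - intros y Hy. specialize (Hle y Hy). assert (c / (1+y) = - (- c / (1 + y))) by (field; lra). lra.
  - exists y. split; auto; lra.
Qed.

Lemma mono_ge f df a b : a < b ->
  (forall x, a <= x <= b -> is_derive f x (df x)) ->
  (forall x, a <= x <= b -> df x <= 0) -> f b <= f a.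
Proof.
  intros Hab Hd Hp.
  assert (- f a <= - f b); [|lra].
  apply (mono_le (fun t => - f t) (fun t => - df t)); auto.
  - intros x Hx. apply (is_derive_opp f x (df x)). auto.
  - intros x Hx. specialize (Hp x Hx). lra.
Qed.

Lemma der_mult f g x df dg : is_derive f x df -> is_derive g x dg ->
  is_derive (fun t => f t * g t) x (df * g x + f x * dg).
Proof.
  intros Hf Hg. apply (is_derive_mult f g x df dg Hf Hg). intros; apply Rmult_comm.
Qed.

Lemma der_opp f x df : is_derive f x df -> is_derive (fun t => - f t) x (- df).
Proof. intros H. apply (is_derive_opp f x df H). Qed.

Lemma der_minus f g x df dg : is_derive f x df -> is_derive g x dg ->
  is_derive (fun t => f t - g t) x (df - dg).
Proof. intros Hf Hg. apply (is_derive_minus f g x df dg Hf Hg). Qed.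

Lemma der_plus f g x df dg : is_derive f x df -> is_derive g x dg ->
  is_derive (fun t => f t + g t) x (df + dg).
Proof. intros Hf Hg. apply (is_derive_plus f g x df dg Hf Hg). Qed.

Lemma gron D dD a b M : a <= b -> 0 <= M ->
  (forall x, a <= x <= b -> is_derive D x (dD x)) ->
  (forall x, a <= x <= b -> Rabs (dD x) <= M * Rabs (D x)) ->
  (D a = 0 -> D b = 0) /\ (D b = 0 -> D a = 0).
Proof.
  intros Hab HM Hd Hb.
  destruct (Req_dec a b) as [<-|Hne]; [tauto|].
  assert (Hpr : forall x, a <= x <= b -> - (M * D x ^ 2) <= D x * dD x <= M * D x ^ 2).
  { intros x Hx. specialize (Hb x Hx).
    assert (Rabs (D x * dD x) <= M * D x ^ 2).
    { rewrite Rabs_mult. replace (D x ^ 2) with (Rabs (D x) * Rabs (D x)).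
      2:{ rewrite <- Rabs_mult. rewrite Rabs_right. ring. nra. }
      apply Rle_trans with (Rabs (D x) * (M * Rabs (D x))).
      apply Rmult_le_compat_l. apply Rabs_pos. exact Hb. lra. }
    apply Rabs_le_between in H. exact H. }
  assert (HD2 : forall x, a <= x <= b -> is_derive (fun t => D t * D t) x (dD x * D x + D x * dD x)).
  { intros x Hx. apply der_mult; apply Hd; auto. }
  split; intros H0.
  - set (h := fun x => (D x * D x) * exp (- (2 * M) * x)).
    assert (h b <= h a).
    { apply (mono_ge h (fun x => (dD x * D x + D x * dD x) * exp (- (2 * M) * x) + (D x * D x) * (- (2 * M) * exp (- (2 * M) * x)))); [lra| |].
      - intros x Hx. unfold h. apply (der_mult (fun t => D t * D t) (fun t => exp (- (2 * M) * t))). auto. auto_derive; auto; ring.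
      - intros x Hx. specialize (Hpr x Hx). assert (0 < exp (- (2 * M) * x)) by apply exp_pos.
        simpl in Hpr. nra. }
    unfold h in H. rewrite H0 in H.
    assert (0 < exp (- (2 * M) * b)) by apply exp_pos.
    assert (D b * D b = 0) by nra. nra.
  - set (h := fun x => (D x * D x) * exp ((2 * M) * x)).
    assert (h a <= h b).
    { apply (mono_le h (fun x => (dD x * D x + D x * dD x) * exp ((2 * M) * x) + (D x * D x) * ((2 * M) * exp ((2 * M) * x)))); [lra| |].
      - intros x Hx. unfold h. apply (der_mult (fun t => D t * D t) (fun t => exp ((2 * M) * t))). auto. auto_derive; auto; ring.
      - intros x Hx. specialize (Hpr x Hx). assert (0 < exp ((2 * M) * x)) by apply exp_pos.
        simpl in Hpr. nra. }
    unfold h in H. rewrite H0 in H.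
    assert (0 < exp ((2 * M) * a)) by apply exp_pos.
    assert (D a * D a = 0) by nra. nra.
Qed.

Definition FF c1 c2 c3 x u := (Pc c1 c2 c3 x - 2 * x * u - / 2 * u ^ 2) / (1 - x ^ 2).
Definition sol c1 c2 c3 (U : R -> R) :=
  forall x, -1 < x < 1 -> is_derive U x (FF c1 c2 c3 x (U x)).

Lemma C1_sol c1 c2 c3 U : is_C1_sol c1 c2 c3 U -> sol c1 c2 c3 U.
Proof.
  intros H x Hx. destruct (H x Hx) as [Hd [_ He]].
  replace (FF c1 c2 c3 x (U x)) with (Derive U x).
  apply Derive_correct; auto.
  unfold FF. rewrite <- He. field. nra.
Qed.

Lemma FF_diff c1 c2 c3 x u v : -1 < x < 1 ->
  FF c1 c2 c3 x u - FF c1 c2 c3 x v = (u - v) * (- (2 * x + (u + v) / 2) / (1 - x ^ 2)).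
Proof. intros Hx. unfold FF. field. nra. Qed.

Lemma div_le a b c d : 0 <= a <= c -> 0 < d <= b -> a / b <= c / d.
Proof.
  intros Ha Hb. unfold Rdiv.
  apply Rmult_le_compat; try lra.
  left; apply Rinv_0_lt_compat; lra.
  apply Rinv_le_contravar; lra.
Qed.

Lemma cont_bound f a b : a <= b -> (forall x, a <= x <= b -> continuity_pt f x) ->
  exists K, 0 <= K /\ forall x, a <= x <= b -> Rabs (f x) <= K.
Proof.
  intros Hab Hc.
  destruct (continuity_ab_maj f a b Hab Hc) as [xM [HM _]].
  destruct (continuity_ab_min f a b Hab Hc) as [xm [Hm _]].
  exists (Rabs (f xM) + Rabs (f xm)). split.
  pose proof (Rabs_pos (f xM)); pose proof (Rabs_pos (f xm)); lra.
  intros x Hx. specialize (HM x Hx). specialize (Hm x Hx).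
  apply Rabs_le. split.
  - pose proof (Rabs_pos (f xM)). pose proof (Rle_abs (- f xm)). rewrite Rabs_Ropp in H0. lra.
  - pose proof (Rabs_pos (f xm)). pose proof (Rle_abs (f xM)). lra.
Qed.

Lemma uniq_aux c1 c2 c3 U V lo hi : sol c1 c2 c3 U -> sol c1 c2 c3 V ->
  -1 < lo < 1 -> -1 < hi < 1 -> lo <= hi ->
  (U lo - V lo = 0 -> U hi - V hi = 0) /\ (U hi - V hi = 0 -> U lo - V lo = 0).
Proof.
  intros HU HV Ha Hb Hlo.
  set (r := Rmax (Rabs lo) (Rabs hi)).
  assert (Hr : r < 1) by (unfold r; apply Rmax_case; apply Rabs_def1; lra).
  assert (Hin : forall x, lo <= x <= hi -> - r <= x <= r).
  { intros x Hx. unfold r in *.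
    pose proof (Rle_abs lo). pose proof (Rle_abs hi). pose proof (Rle_abs (-lo)). pose proof (Rle_abs (-hi)).
    rewrite Rabs_Ropp in *. pose proof (Rmax_l (Rabs lo) (Rabs hi)). pose proof (Rmax_r (Rabs lo) (Rabs hi)).
    lra. }
  assert (Hin2 : forall x, lo <= x <= hi -> -1 < x < 1) by (intros x Hx; specialize (Hin x Hx); lra).
  destruct (cont_bound U lo hi Hlo) as [KU [HKU HU2]].
  { intros x Hx. apply (der_cont U x _ (HU x (Hin2 x Hx))). }
  destruct (cont_bound V lo hi Hlo) as [KV [HKV HV2]].
  { intros x Hx. apply (der_cont V x _ (HV x (Hin2 x Hx))). }
  assert (Hr0 : 0 <= r) by (unfold r; apply Rmax_case; apply Rabs_pos).
  set (M := (2 + (KU + KV) / 2) / (1 - r ^ 2)).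
  assert (HM : 0 <= M) by (unfold M; apply Rmult_le_pos; [lra| left; apply Rinv_0_lt_compat; nra]).
  apply (gron (fun x => U x - V x) (fun x => FF c1 c2 c3 x (U x) - FF c1 c2 c3 x (V x)) lo hi M Hlo HM).
  - intros x Hx. apply der_minus; [apply HU|apply HV]; auto.
  - intros x Hx. rewrite FF_diff by auto. rewrite Rabs_mult. rewrite Rmult_comm.
    apply Rmult_le_compat_r. apply Rabs_pos.
    specialize (Hin x Hx). specialize (HU2 x Hx). specialize (HV2 x Hx).
    unfold Rdiv at 1. rewrite Rabs_mult, Rabs_Ropp, Rabs_inv.
    rewrite (Rabs_right (1 - x^2)) by nra.
    apply div_le. split. apply Rabs_pos.
    apply Rabs_le. apply Rabs_le_between in HU2. apply Rabs_le_between in HV2. lra.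
    split. nra. nra.
Qed.

Lemma uniq c1 c2 c3 U V a b : sol c1 c2 c3 U -> sol c1 c2 c3 V ->
  -1 < a < 1 -> -1 < b < 1 -> U a = V a -> U b = V b.
Proof.
  intros HU HV Ha Hb Hab.
  destruct (Rle_or_lt a b) as [h|h].
  - destruct (uniq_aux c1 c2 c3 U V a b HU HV Ha Hb h) as [G1 _]. specialize (G1 ltac:(lra)). lra.
  - destruct (uniq_aux c1 c2 c3 U V b a HU HV Hb Ha ltac:(lra)) as [_ G2]. specialize (G2 ltac:(lra)). lra.
Qed.

Lemma sign_const c1 c2 c3 U V x0 : sol c1 c2 c3 U -> sol c1 c2 c3 V ->
  -1 < x0 < 1 -> U x0 <> V x0 ->
  (forall x, -1 < x < 1 -> U x < V x) \/ (forall x, -1 < x < 1 -> V x < U x).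
Proof.
  intros HU HV Hx0 Hne.
  assert (Hn : forall x, -1 < x < 1 -> U x <> V x).
  { intros x Hx Heq. apply Hne. apply (uniq c1 c2 c3 U V x x0); auto. }
  assert (Hc : forall x, -1 < x < 1 -> continuity_pt (fun t => V t - U t) x).
  { intros x Hx. apply (der_cont _ x _ (der_minus V U x _ _ (HV x Hx) (HU x Hx))). }
  assert (HI : forall a b, -1 < a < 1 -> -1 < b < 1 -> a < b ->
     (V a - U a) * (V b - U b) < 0 -> False).
  { intros a b Ha Hb Hab Hp.
    destruct (Rlt_or_le (V a - U a) 0) as [h|h].
    - assert (0 < V b - U b) by nra.
      destruct (Ranalysis5.IVT_interv (fun t => V t - U t) a b) as [z [Hz1 Hz2]]; auto.
      intros t Ht. apply Hc. lra.
      apply (Hn z). lra. lra.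
    - assert (V b - U b < 0) by nra. assert (0 < V a - U a) by nra.
      destruct (Ranalysis5.IVT_interv (fun t => U t - V t) a b) as [z [Hz1 Hz2]]; auto.
      intros t Ht. apply (der_cont _ t _ (der_minus U V t _ _ (HU t ltac:(lra)) (HV t ltac:(lra)))).
      lra. lra.
      apply (Hn z). lra. lra. }
  destruct (Rlt_or_le (U x0) (V x0)) as [h|h].
  - left. intros x Hx. destruct (Rlt_or_le (U x) (V x)) as [h2|h2]; auto. exfalso.
    assert (V x < U x) by (specialize (Hn x Hx); lra).
    destruct (Rlt_or_le x x0) as [h3|h3].
    + apply (HI x x0); auto. nra.
    + destruct (Req_dec x x0) as [->|h4]; [lra|]. apply (HI x0 x); auto. lra. nra.
  - right. intros x Hx. destruct (Rlt_or_le (V x) (U x)) as [h2|h2]; auto. exfalso.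
    assert (V x0 < U x0) by lra.
    assert (U x < V x) by (specialize (Hn x Hx); lra).
    destruct (Rlt_or_le x x0) as [h3|h3].
    + apply (HI x x0); auto. nra.
    + destruct (Req_dec x x0) as [->|h4]; [lra|]. apply (HI x0 x); auto. lra. nra.
Qed.

Lemma sum_ge_term (u : nat -> R) N n : (forall k, 0 <= u k) -> (n <= N)%nat -> u n <= sum_f_R0 u N.
Proof.
  intros Hp. induction N; intros Hn.
  - assert (n = 0%nat) by lia. subst. simpl. lra.
  - destruct (Nat.eq_dec n (S N)) as [->|Hne].
    + simpl. assert (0 <= sum_f_R0 u N). { clear - Hp. induction N; simpl. apply Hp. specialize (Hp (S N)). lra. }
      lra.
    + simpl. specialize (IHN ltac:(lia)). specialize (Hp (S N)). lra.
Qed.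

Lemma lim0_bounded u : is_lim_seq u 0 -> exists M, forall n, Rabs (u n) <= M.
Proof.
  intros H. apply is_lim_seq_Reals in H.
  destruct (H 1 Rlt_0_1) as [N HN].
  exists (1 + sum_f_R0 (fun k => Rabs (u k)) N). intros n.
  assert (0 <= sum_f_R0 (fun k => Rabs (u k)) N).
  { clear. induction N; simpl. apply Rabs_pos. pose proof (Rabs_pos (u (S N))). lra. }
  destruct (Compare_dec.le_lt_dec n N) as [h|h].
  - pose proof (sum_ge_term (fun k => Rabs (u k)) N n (fun k => Rabs_pos _) h). simpl in H1. lra.
  - specialize (HN n ltac:(lia)). unfold R_dist in HN. rewrite Rminus_0_r in HN. lra.
Qed.

Lemma PS_bound (V : R -> R) t :
  (exists (d : R) (a : nat -> R), 0 < d /\ a O = t /\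
     forall x, -1 < x < -1 + d -> is_pseries a (1 + x) (V x)) ->
  exists dl B, 0 < dl /\ 0 <= B /\ forall x, -1 < x < -1 + dl -> Rabs (V x - t) <= B * (1 + x).
Proof.
  intros [d [a [Hd [Ha0 Hs]]]].
  set (y0 := d / 2).
  assert (Hy0 : is_pseries a y0 (V (-1 + y0))).
  { replace y0 with (1 + (-1 + y0)) at 1 by ring. apply Hs. unfold y0; lra. }
  apply is_pseries_R in Hy0.
  assert (Hb : exists M, forall n, Rabs (a n * y0 ^ n) <= M).
  { apply lim0_bounded. apply ex_series_lim_0. eexists; exact Hy0. }
  assert (Hrad : Rbar_le y0 (CV_radius a)).
  { apply (proj1 (CV_radius_bounded a)). exact Hb. }
  set (y1 := y0 / 2).
  assert (Hin : forall y, 0 <= y <= y1 -> Rbar_lt (Rabs y) (CV_radius a)).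
  { intros y Hy. apply Rbar_lt_le_trans with y0; auto. simpl. rewrite Rabs_right by lra. unfold y1, y0 in *. lra. }
  set (b := PS_decr_1 a).
  assert (Hcb : forall y, 0 <= y <= y1 -> continuity_pt (PSeries b) y).
  { intros y Hy. apply PSeries_continuity. unfold b. rewrite CV_radius_decr_1. auto. }
  assert (Hy1 : 0 <= y1) by (unfold y1, y0; lra).
  destruct (cont_bound (PSeries b) 0 y1 Hy1 Hcb) as [K [HK HKb]].
  exists y1, K. split; [unfold y1, y0; lra|]. split; auto.
  intros x Hx.
  assert (Hy : 0 <= 1 + x <= y1) by lra.
  assert (HV : V x = PSeries a (1 + x)).
  { symmetry. apply is_pseries_unique. apply Hs. unfold y1, y0 in *. lra. }
  rewrite HV, PSeries_decr_1.
  2:{ apply CV_radius_inside. apply Hin. auto. }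
  rewrite Ha0. replace (t + (1 + x) * PSeries (PS_decr_1 a) (1 + x) - t) with ((1 + x) * PSeries b (1 + x)) by (unfold b; ring).
  rewrite Rabs_mult, Rabs_right by lra. rewrite Rmult_comm. apply Rmult_le_compat_r. lra. apply HKb. auto.
Qed.

Definition PSb (t : R) (Up : R -> R) := exists dl B, 0 < dl /\ 0 <= B /\
  forall x, -1 < x < -1 + dl -> Rabs (Up x - t) <= B * (1 + x).

Lemma exp_ge a b : a <= b -> exp a <= exp b.
Proof. intros [h|h]. left; apply exp_increasing; auto. subst; lra. Qed.

Lemma key_ineq c1 c2 c3 y u v B s : -1 < y <= -1/2 -> v < u -> 0 <= s -> 0 <= B ->
  - B * (1 + y) <= v - (2 + 2 * s) ->
  / (4 * (1 + y)) <= - (FF c1 c2 c3 y u - FF c1 c2 c3 y v) / (u - v) ^ 2 + B / (u - v).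
Proof.
  intros Hy Huv Hs HB Hv.
  rewrite FF_diff by lra.
  set (h := 1 + y). set (D := u - v). set (w := 1 - y ^ 2).
  assert (Hw : w = h * (2 - h)) by (unfold w, h; ring).
  assert (Hh : 0 < h <= 1/2) by (unfold h; lra).
  assert (HD : 0 < D) by (unfold D; lra).
  assert (Hw0 : 0 < w) by (rewrite Hw; nra).
  replace (- (D * (- (2 * y + (u + v) / 2) / w)) / D ^ 2 + B / D)
    with ((2 * y + v + B * w) / (w * D) + / (2 * w)).
  2:{ unfold D. field. split; lra. }
  assert (0 <= (2 * y + v + B * w) / (w * D)).
  { assert (0 <= B * h * (1 - h)) by (apply Rmult_le_pos; [apply Rmult_le_pos|]; lra).
    apply Rmult_le_pos. rewrite Hw. replace y with (h - 1) by (unfold h; ring). assert (E: 2*(h-1) + v + B*(h*(2-h)) = (v - (2+2*s) + B*h) + 2*h + 2*s + B*h*(1-h)) by ring. rewrite E. change (1 + y) with h in Hv. lra.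
    left. apply Rinv_0_lt_compat. nra. }
  assert (/ (4 * h) <= / (2 * w)).
  { apply Rinv_le_contravar. nra. rewrite Hw. nra. }
  lra.
Qed.

Lemma no_above c1 c2 c3 Up U : sol c1 c2 c3 Up -> PSb (tau2 c1) Up -> sol c1 c2 c3 U ->
  (forall x, -1 < x < 1 -> Up x < U x) -> False.
Proof.
  intros HUp [dl [B [Hdl [HB Hps]]]] HU Hlt.
  set (x0 := -1 + Rmin dl 1 / 2).
  assert (Hx0 : -1 < x0 <= -1/2 /\ x0 < -1 + dl) by (unfold x0; apply Rmin_case_strong; intros; lra).
  set (Phi := fun y => / (U y - Up y) * exp (B * y)).
  set (dPhi := fun y => (- (FF c1 c2 c3 y (U y) - FF c1 c2 c3 y (Up y)) / (U y - Up y) ^ 2) * exp (B * y)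
                        + / (U y - Up y) * (B * exp (B * y))).
  destruct (div_down Phi dPhi x0 (exp (- B) / 4)) with (B := 0) as [y [Hy HPy]].
  - lra.
  - apply Rdiv_lt_0_compat. apply exp_pos. lra.
  - intros y Hy. unfold Phi, dPhi.
    apply (der_mult (fun t => / (U t - Up t)) (fun t => exp (B * t))).
    + apply (is_derive_inv (fun t => U t - Up t)). apply (der_minus U Up). apply HU; lra. apply HUp; lra.
      specialize (Hlt y ltac:(lra)). lra.
    + auto_derive. auto. ring.
  - intros y Hy. unfold dPhi.
    specialize (Hlt y ltac:(lra)).
    assert (Hv : - B * (1 + y) <= Up y - (2 + 2 * sqrt (1 + c1))).
    { specialize (Hps y ltac:(lra)). apply Rabs_le_between in Hps. unfold tau2 in Hps. lra. }
    pose proof (key_ineq c1 c2 c3 y (U y) (Up y) B (sqrt (1 + c1)) ltac:(lra) Hlt (sqrt_pos _) HB Hv) as K.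
    assert (He : exp (- B) <= exp (B * y)) by (apply exp_ge; nra).
    pose proof (exp_pos (B * y)).
    replace (exp (- B) / 4 / (1 + y)) with (exp (- B) * / (4 * (1 + y))) by (field; lra).
    replace ((- (FF c1 c2 c3 y (U y) - FF c1 c2 c3 y (Up y)) / (U y - Up y) ^ 2) * exp (B * y) +
      / (U y - Up y) * (B * exp (B * y))) with
      (exp (B * y) * (- (FF c1 c2 c3 y (U y) - FF c1 c2 c3 y (Up y)) / (U y - Up y) ^ 2 + B / (U y - Up y)))
      by (field; lra).
    apply Rmult_le_compat; [pose proof (exp_pos (-B)); lra | left; apply Rinv_0_lt_compat; lra | lra | lra].
  - specialize (Hlt y ltac:(lra)). unfold Phi in HPy.
    assert (0 < / (U y - Up y)) by (apply Rinv_0_lt_compat; lra).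
    pose proof (exp_pos (B * y)). nra.
Qed.

Lemma FF_form c1 c2 c3 x u : -1 < x < 1 -> -1 <= c1 ->
  FF c1 c2 c3 x u * ((1 + x) * (2 - (1 + x))) =
  (1 + x) * ((c2 - c1 + c3 * (1 - x)) - 2 * u) - (u - tau1 c1) * (u - tau2 c1) / 2.
Proof.
  intros Hx Hc. unfold FF, tau1, tau2, Pc.
  pose proof (sqrt_sqrt (1 + c1) ltac:(lra)) as Hs.
  set (s := sqrt (1 + c1)) in *. clearbody s.
  assert (E : c1 = s * s - 1) by lra. rewrite E. field. nra.
Qed.

Lemma K_bound c1 c2 c3 x : -1 < x < 1 ->
  Rabs (c2 - c1 + c3 * (1 - x)) <= Rabs (c2 - c1) + 2 * Rabs c3.
Proof.
  intros Hx. eapply Rle_trans. apply Rabs_triang.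
  rewrite Rabs_mult. rewrite (Rabs_right (1 - x)) by lra.
  pose proof (Rabs_pos c3). nra.
Qed.

Lemma stepA c1 c2 c3 U : -1 <= c1 -> sol c1 c2 c3 U ->
  forall eps, 0 < eps -> exists x1, -1 < x1 < 1 /\ forall y, -1 < y <= x1 -> tau1 c1 - eps < U y.
Proof.
  intros Hc HU eps Heps.
  set (s := sqrt (1 + c1)). assert (Hs : 0 <= s) by apply sqrt_pos.
  set (K0 := Rabs (c2 - c1) + 2 * Rabs c3).
  set (Acst := K0 + 2 * Rabs (tau1 c1)).
  assert (HA : 0 <= Acst) by (unfold Acst, K0; pose proof (Rabs_pos (c2 - c1)); pose proof (Rabs_pos c3); pose proof (Rabs_pos (tau1 c1)); lra).
  set (dl := Rmin (1/2) (Rmin (eps ^ 2 / (8 * (Acst + 1))) (eps / 16))).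
  assert (Hdl : 0 < dl /\ dl <= 1/2 /\ dl * (Acst + 1) <= eps ^ 2 / 8 /\ dl <= eps / 16).
  { unfold dl. assert (0 < eps ^ 2 / (8 * (Acst + 1))) by (apply Rdiv_lt_0_compat; nra).
    assert (eps ^ 2 / (8 * (Acst + 1)) * (Acst + 1) = eps ^ 2 / 8) by (field; lra).
    repeat apply Rmin_case_strong; intros; repeat split; try lra; nra. }
  assert (Hneg : forall y, -1 < y < -1 + dl -> U y <= tau1 c1 - eps ->
             FF c1 c2 c3 y (U y) <= - (eps ^ 2 / 8) / (1 + y)).
  { intros y Hy Hu.
    pose proof (FF_form c1 c2 c3 y (U y) ltac:(lra) Hc) as Hf.
    pose proof (K_bound c1 c2 c3 y ltac:(lra)) as Hk. fold K0 in Hk.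
    apply Rabs_le_between in Hk.
    set (h := 1 + y) in *. set (Kx := c2 - c1 + c3 * (1 - y)) in *.
    set (Fv := FF c1 c2 c3 y (U y)) in *. set (u := U y) in *.
    set (Vv := tau1 c1 - u).
    assert (HV : eps <= Vv) by (unfold Vv; lra).
    assert (Ht2 : tau2 c1 = tau1 c1 + 4 * s) by (unfold s, tau1, tau2; lra).
    assert (HQ : (u - tau1 c1) * (u - tau2 c1) / 2 = Vv * (Vv + 4 * s) / 2) by (unfold Vv; rewrite Ht2; field).
    assert (HK2 : h * (Kx - 2 * u) = h * (Kx - 2 * tau1 c1) + 2 * h * Vv) by (unfold Vv; ring).
    assert (Habs : - tau1 c1 <= Rabs (tau1 c1)) by (pose proof (Rle_abs (- tau1 c1)); rewrite Rabs_Ropp in H; lra).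
    assert (Hh : 0 < h < dl) by (unfold h; lra).
    assert (H1 : h * (Kx - 2 * tau1 c1) <= eps ^ 2 / 8).
    { assert (Kx - 2 * tau1 c1 <= Acst) by (unfold Acst; lra).
      apply Rle_trans with (h * Acst). apply Rmult_le_compat_l; lra.
      apply Rle_trans with (dl * (Acst + 1)). nra. lra. }
    assert (H2 : 2 * h * Vv <= eps / 8 * Vv) by nra.
    assert (H3 : Vv * Vv / 2 <= Vv * (Vv + 4 * s) / 2) by nra.
    assert (HN : Fv * (h * (2 - h)) <= - (eps ^ 2) / 4) by (rewrite Hf, HQ, HK2; nra).
    assert (HG : Fv * h * 2 <= - eps ^ 2 / 4) by nra.
    apply (Rmult_le_reg_r h). lra.
    replace (- (eps ^ 2 / 8) / h * h) with (- (eps ^ 2 / 8)) by (field; lra). nra. }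
  set (x0 := -1 + dl / 2).
  destruct (classic (exists x1, -1 < x1 <= x0 /\ tau1 c1 - eps < U x1)) as [[x1 [Hx1 Hux1]]|Hno].
  - exists x1. split. unfold x0 in Hx1; lra.
    apply (barrier U (fun y => FF c1 c2 c3 y (U y)) (-1) x1 (tau1 c1 - eps)); auto.
    + lra.
    + intros y Hy. apply HU. unfold x0 in Hx1; lra.
    + intros y Hy Heq. assert (-(eps ^ 2 / 8) / (1 + y) < 0).
      { unfold Rdiv. rewrite Ropp_mult_distr_l_reverse. apply Ropp_lt_gt_0_contravar.
        apply Rmult_lt_0_compat. nra. apply Rinv_0_lt_compat. lra. }
      assert (FF c1 c2 c3 y (U y) <= - (eps ^ 2 / 8) / (1 + y)).
      { apply Hneg. unfold x0 in Hx1; lra. lra. } lra.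
  - exfalso.
    assert (Hall : forall y, -1 < y <= x0 -> U y <= tau1 c1 - eps).
    { intros y Hy. destruct (Rle_or_lt (U y) (tau1 c1 - eps)); auto. exfalso; apply Hno; exists y; auto. }
    destruct (div_up U (fun y => FF c1 c2 c3 y (U y)) x0 (eps ^ 2 / 8)) with (B := tau1 c1 - eps) as [y [Hy Hy2]].
    + unfold x0; lra.
    + nra.
    + intros y Hy. apply HU. unfold x0 in Hy; lra.
    + intros y Hy. replace (- (eps ^ 2 / 8) / (1 + y)) with (- (eps ^ 2 / 8) / (1 + y)) by reflexivity.
      apply Hneg. unfold x0 in Hy; lra. apply Hall; auto.
    + specialize (Hall y ltac:(lra)). lra.
Qed.

Lemma der_ln f x df : is_derive f x df -> 0 < f x ->
  is_derive (fun t => ln (f t)) x (df / f x).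
Proof.
  intros Hf Hp.
  assert (Hl : is_derive ln (f x) (/ f x)).
  { apply is_derive_Reals. apply derivable_pt_lim_ln. auto. }
  pose proof (is_derive_comp ln f x (/ f x) df Hl Hf). exact H.
Qed.

Lemma stepB c1 c2 c3 Up U : -1 <= c1 -> 0 < sqrt (1 + c1) ->
  sol c1 c2 c3 Up -> PSb (tau2 c1) Up -> sol c1 c2 c3 U ->
  (forall x, -1 < x < 1 -> U x < Up x) ->
  forall eps, 0 < eps -> eps <= sqrt (1 + c1) ->
  exists x3, -1 < x3 < 1 /\ forall y, -1 < y <= x3 -> U y < tau1 c1 + eps.
Proof.
  intros Hc Hs0 HUp [dl [B [Hdl [HB Hps]]]] HU Hlt eps Heps Hes.
  set (s := sqrt (1 + c1)) in *.
  assert (Ht1 : tau1 c1 = 2 - 2 * s) by reflexivity.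
  assert (Ht2 : tau2 c1 = 2 + 2 * s) by reflexivity.
  set (K0 := Rabs (c2 - c1) + 2 * Rabs c3).
  assert (HK0 : 0 <= K0) by (unfold K0; pose proof (Rabs_pos (c2 - c1)); pose proof (Rabs_pos c3); lra).
  set (W := K0 + 4 + 4 * s + 1).
  assert (HW : 0 < W) by (unfold W; lra).
  set (h0 := Rmin (Rmin dl (1/2)) (Rmin (s / (2 * B + 1)) (eps * s / (8 * W)))).
  assert (Hh0 : 0 < h0 /\ h0 <= dl /\ h0 <= 1/2 /\ B * h0 <= s / 2 /\ h0 * W <= eps * s / 8).
  { assert (0 < s / (2 * B + 1)) by (apply Rdiv_lt_0_compat; lra).
    assert (0 < eps * s / (8 * W)) by (apply Rdiv_lt_0_compat; nra).
    assert (s / (2 * B + 1) * (2 * B + 1) = s) by (field; lra).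
    assert (eps * s / (8 * W) * W = eps * s / 8) by (field; lra).
    unfold h0. repeat apply Rmin_case_strong; intros; repeat split; try lra; nra. }
  set (x0 := -1 + h0 / 2).
  assert (Hx0 : -1 < x0 < -1/2) by (unfold x0; lra).
  assert (Hreg : forall y, -1 < y <= x0 -> tau1 c1 + eps <= U y <= tau2 c1 - s / 2 ->
            (eps * s / 16) / (1 + y) <= FF c1 c2 c3 y (U y)).
  { intros y Hy Hu.
    pose proof (FF_form c1 c2 c3 y (U y) ltac:(lra) Hc) as Hf.
    pose proof (K_bound c1 c2 c3 y ltac:(lra)) as Hk. fold K0 in Hk.
    apply Rabs_le_between in Hk.
    set (h := 1 + y) in *. set (Kx := c2 - c1 + c3 * (1 - y)) in *.
    set (Fv := FF c1 c2 c3 y (U y)) in *. set (u := U y) in *.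
    assert (Hh : 0 < h < h0) by (unfold h, x0 in *; lra).
    assert (Hku : Rabs (Kx - 2 * u) <= W).
    { apply Rabs_le. unfold W. pose proof Hu as Hu2. rewrite Ht1, Ht2 in Hu2. lra. }
    apply Rabs_le_between in Hku.
    assert (H1 : - (eps * s / 8) <= h * (Kx - 2 * u)).
    { apply Rle_trans with (- (h * W)). nra. nra. }
    assert (H2 : eps * (s / 2) <= (u - tau1 c1) * (tau2 c1 - u)).
    { apply Rmult_le_compat; lra. }
    assert (HN : eps * s / 8 <= Fv * (h * (2 - h))).
    { rewrite Hf. replace ((u - tau1 c1) * (u - tau2 c1) / 2) with (- ((u - tau1 c1) * (tau2 c1 - u)) / 2) by field. lra. }
    assert (HG : eps * s / 16 <= Fv * h).
    { replace (Fv * (h * (2 - h))) with ((Fv * h) * (2 - h)) in HN by ring.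
      set (G := Fv * h) in *. clearbody G.
      assert (0 < G).
      { assert (0 < eps * s) by nra. assert (0 < 2 - h) by lra. destruct (Rlt_or_le 0 G); auto. assert (0 <= (- G) * (2 - h)) by (apply Rmult_le_pos; lra). lra. }
      assert (0 < 2 - h) by lra. nra. }
    apply (Rmult_le_reg_r h). lra.
    replace (eps * s / 16 / h * h) with (eps * s / 16) by (field; lra). lra. }
  assert (Hc0 : 0 < eps * s / 16) by nra.
  assert (HB1 : exists x1, -1 < x1 <= x0 /\ s < Up x1 - U x1).
  { apply NNPP. intros Hno.
    assert (Hall : forall y, -1 < y <= x0 -> Up y - U y <= s).
    { intros y Hy. destruct (Rle_or_lt (Up y - U y) s); auto. exfalso; apply Hno; exists y; auto. }
    destruct (div_up (fun t => ln (Up t - U t))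
      (fun t => (FF c1 c2 c3 t (Up t) - FF c1 c2 c3 t (U t)) / (Up t - U t)) x0 (s / 2))
      with (B := ln s) as [y [Hy Hy2]].
    - lra.
    - lra.
    - intros y Hy. apply (der_ln (fun t => Up t - U t)). apply (der_minus Up U). apply HUp; lra. apply HU; lra.
      specialize (Hlt y ltac:(lra)). lra.
    - intros y Hy. specialize (Hlt y ltac:(lra)). specialize (Hall y Hy).
      rewrite FF_diff by lra.
      replace ((Up y - U y) * (- (2 * y + (Up y + U y) / 2) / (1 - y ^ 2)) / (Up y - U y))
        with (- (2 * y + (Up y + U y) / 2) / (1 - y ^ 2)) by (field; split; [nra|lra]).
      specialize (Hps y ltac:(unfold x0 in Hy; lra)). apply Rabs_le_between in Hps.
      assert (Hbh : B * (1 + y) <= s / 2) by (apply Rle_trans with (B * h0); [apply Rmult_le_compat_l; unfold x0 in Hy; lra | lra]).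
      assert (Hq : s <= 2 * y + (Up y + U y) / 2) by (rewrite Ht2 in Hps; lra).
      set (h := 1 + y) in *.
      replace (1 - y ^ 2) with (h * (2 - h)) by (unfold h; ring).
      replace y with (h - 1) in Hq by (unfold h; ring).
      assert (Hh : 0 < h <= 1/2) by (unfold h, x0 in *; lra).
      unfold Rdiv. rewrite !Ropp_mult_distr_l_reverse.
      apply Ropp_le_contravar.
      apply Rle_trans with (s * / (h * (2 - h))).
      + rewrite <- (Rmult_1_l (/ h)). replace (s * / 2 * (1 * / h)) with (s * / (2 * h)) by (field; lra).
        apply Rmult_le_compat_l. lra. apply Rinv_le_contravar. nra. nra.
      + apply Rmult_le_compat_r. left. apply Rinv_0_lt_compat. nra. lra.
    - specialize (Hall y ltac:(lra)). specialize (Hlt y ltac:(lra)).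
      assert (ln (Up y - U y) <= ln s) by (apply ln_le; lra). lra. }
  destruct HB1 as [x1 [Hx1 HD1]].
  assert (HUx1 : U x1 < tau2 c1 - s / 2).
  { specialize (Hps x1 ltac:(unfold x0 in Hx1; lra)). apply Rabs_le_between in Hps.
    assert (B * (1 + x1) <= s / 2) by (apply Rle_trans with (B * h0); [apply Rmult_le_compat_l; unfold x0 in Hx1; lra | lra]).
    lra. }
  assert (HB2 : forall y, -1 < y <= x1 -> U y < tau2 c1 - s / 2).
  { apply (barrier_below U (fun y => FF c1 c2 c3 y (U y)) (-1) x1); auto. lra.
    - intros y Hy. apply HU. lra.
    - intros y Hy Heq.
      assert ((eps * s / 16) / (1 + y) <= FF c1 c2 c3 y (U y)).
      { apply Hreg. lra. rewrite Heq. rewrite Ht1, Ht2. lra. }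
      assert (0 < (eps * s / 16) / (1 + y)) by (apply Rdiv_lt_0_compat; lra). lra. }
  assert (HB3 : exists x3, -1 < x3 <= x1 /\ U x3 < tau1 c1 + eps).
  { apply NNPP. intros Hno.
    assert (Hall : forall y, -1 < y <= x1 -> tau1 c1 + eps <= U y).
    { intros y Hy. destruct (Rle_or_lt (tau1 c1 + eps) (U y)); auto. exfalso; apply Hno; exists y; auto. }
    destruct (div_down U (fun y => FF c1 c2 c3 y (U y)) x1 (eps * s / 16)) with (B := tau1 c1 + eps) as [y [Hy Hy2]].
    - lra.
    - lra.
    - intros y Hy. apply HU. lra.
    - intros y Hy. apply Hreg. lra. split. apply Hall; auto. left. apply HB2; auto.
    - specialize (Hall y ltac:(lra)). lra. }
  destruct HB3 as [x3 [Hx3 HU3]].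
  exists x3. split. lra.
  apply (barrier_below U (fun y => FF c1 c2 c3 y (U y)) (-1) x3); auto. lra.
  - intros y Hy. apply HU. lra.
  - intros y Hy Heq.
    assert ((eps * s / 16) / (1 + y) <= FF c1 c2 c3 y (U y)).
    { apply Hreg. lra. rewrite Heq. rewrite Ht1, Ht2. lra. }
    assert (0 < (eps * s / 16) / (1 + y)) by (apply Rdiv_lt_0_compat; lra). lra.
Qed.

Lemma main_left c1 c2 c3 Up U : -1 <= c1 -> sol c1 c2 c3 Up -> PSb (tau2 c1) Up ->
  sol c1 c2 c3 U -> (exists x, -1 < x < 1 /\ U x <> Up x) ->
  (forall x, -1 < x < 1 -> U x < Up x) /\
  (forall eps, 0 < eps -> exists dl, 0 < dl /\ forall x, -1 < x < -1 + dl -> Rabs (U x - tau1 c1) < eps).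
Proof.
  intros Hc HUp HPS HU [x0 [Hx0 Hne]].
  assert (Hlt : forall x, -1 < x < 1 -> U x < Up x).
  { destruct (sign_const c1 c2 c3 U Up x0 HU HUp Hx0 Hne) as [h|h]; auto.
    exfalso. apply (no_above c1 c2 c3 Up U HUp HPS HU h). }
  split; auto.
  intros eps Heps.
  destruct (stepA c1 c2 c3 U Hc HU eps Heps) as [x1 [Hx1 HA]].
  destruct (Rlt_or_le 0 (sqrt (1 + c1))) as [Hs|Hs].
  - destruct (stepB c1 c2 c3 Up U Hc Hs HUp HPS HU Hlt (Rmin eps (sqrt (1 + c1)))) as [x3 [Hx3 HB]].
    apply Rmin_case; lra. apply Rmin_r.
    exists (Rmin (x1 + 1) (x3 + 1)). split. apply Rmin_case; lra.
    intros x Hx. assert (x <= x1 /\ x <= x3) by (revert Hx; apply Rmin_case_strong; intros; lra).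
    specialize (HA x ltac:(lra)). specialize (HB x ltac:(lra)).
    pose proof (Rmin_l eps (sqrt (1 + c1))). apply Rabs_def1; lra.
  - assert (Hs0 : sqrt (1 + c1) = 0) by (pose proof (sqrt_pos (1 + c1)); lra).
    destruct HPS as [dl [B [Hdl [HB Hps]]]].
    set (d := Rmin (Rmin dl (x1 + 1)) (eps / (B + 1))).
    assert (Hd : 0 < d /\ d <= dl /\ d <= x1 + 1 /\ d * (B + 1) <= eps).
    { assert (0 < eps / (B + 1)) by (apply Rdiv_lt_0_compat; lra).
      assert (eps / (B + 1) * (B + 1) = eps) by (field; lra).
      unfold d; repeat apply Rmin_case_strong; intros; repeat split; try lra; nra. }
    exists d. split. lra. intros x Hx.
    specialize (HA x ltac:(lra)). specialize (Hlt x ltac:(lra)).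
    specialize (Hps x ltac:(lra)). apply Rabs_le_between in Hps.
    assert (tau2 c1 = tau1 c1) by (unfold tau1, tau2; rewrite Hs0; ring).
    assert (B * (1 + x) < eps) by nra.
    apply Rabs_def1; lra.
Qed.

Lemma refl_sol c1 c2 c3 U : sol c1 c2 c3 U -> sol c2 c1 c3 (fun x => - U (- x)).
Proof.
  intros HU x Hx.
  assert (H1 : is_derive (fun t => U (- t)) x (scal (-1) (FF c1 c2 c3 (- x) (U (- x))))).
  { apply (is_derive_comp U (fun t => - t)). apply HU. lra. auto_derive. auto. ring. }
  pose proof (der_opp _ _ _ H1) as H2.
  replace (FF c2 c1 c3 x (- U (- x))) with (- scal (-1) (FF c1 c2 c3 (- x) (U (- x)))). exact H2.
  unfold scal; simpl. unfold mult; simpl. unfold FF, Pc. field. nra.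
Qed.

Lemma refl_PS c2 Um : (exists (d : R) (b : nat -> R), 0 < d /\ b O = tau1' c2 /\
    forall x, 1 - d < x < 1 -> is_pseries b (1 - x) (Um x)) ->
  (exists (d : R) (a : nat -> R), 0 < d /\ a O = tau2 c2 /\
     forall x, -1 < x < -1 + d -> is_pseries a (1 + x) ((fun x => - Um (- x)) x)).
Proof.
  intros [d [b [Hd [Hb0 Hs]]]]. exists d, (PS_opp b). split; auto. split.
  - unfold PS_opp. rewrite Hb0. unfold tau1', tau2. unfold opp; simpl. ring.
  - intros x Hx. specialize (Hs (- x) ltac:(lra)). replace (1 - - x) with (1 + x) in Hs by ring.
    apply (is_pseries_opp b (1 + x) (Um (- x)) Hs).
Qed.

Lemma lim_right U l : (forall eps, 0 < eps -> exists dl, 0 < dl /\ forall x, -1 < x < -1 + dl -> Rabs (U x - l) < eps) ->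
  filterlim U (at_right (-1)) (locally l).
Proof.
  intros H. apply filterlim_locally. intros eps.
  destruct (H eps (cond_pos eps)) as [d [Hd H']].
  exists (mkposreal d Hd). intros y Hy Hy2. apply H'.
  change (Rabs (y - -1) < d) in Hy. apply Rabs_def2 in Hy. lra.
Qed.

Lemma lim_left U l : (forall eps, 0 < eps -> exists dl, 0 < dl /\ forall x, 1 - dl < x < 1 -> Rabs (U x - l) < eps) ->
  filterlim U (at_left 1) (locally l).
Proof.
  intros H. apply filterlim_locally. intros eps.
  destruct (H eps (cond_pos eps)) as [d [Hd H']].
  exists (mkposreal d Hd). intros y Hy Hy2. apply H'.
  change (Rabs (y - 1) < d) in Hy. apply Rabs_def2 in Hy. lra.
Qed.

Theorem lemma2p8 (c1 c2 c3 : R) (Up Um U : R -> R) :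
  -1 <= c1 -> -1 <= c2 -> c3bar c1 c2 < c3 ->
  is_Uplus c1 c2 c3 Up -> is_Uminus c1 c2 c3 Um ->
  is_C1_sol c1 c2 c3 U ->
  (exists x, -1 < x < 1 /\ U x <> Up x) ->
  (exists x, -1 < x < 1 /\ U x <> Um x) ->
  (forall x, -1 < x < 1 -> Um x < U x < Up x) /\
  filterlim U (at_right (-1)) (locally (tau1 c1)) /\
  filterlim U (at_left 1) (locally (tau2' c2)).
Proof.
  intros Hc1 Hc2 _ [HUp HPp] [HUm HPm] HU Hne1 Hne2.
  apply C1_sol in HUp. apply C1_sol in HUm. apply C1_sol in HU.
  destruct (main_left c1 c2 c3 Up U Hc1 HUp (PS_bound Up (tau2 c1) HPp) HU Hne1) as [L1 L2].
  destruct (main_left c2 c1 c3 (fun x => - Um (- x)) (fun x => - U (- x)) Hc2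
     (refl_sol _ _ _ _ HUm) (PS_bound _ (tau2 c2) (refl_PS c2 Um HPm)) (refl_sol _ _ _ _ HU))
     as [R1 R2].
  { destruct Hne2 as [x [Hx Hn]]. exists (- x). split. lra. rewrite Ropp_involutive. lra. }
  split; [|split].
  - intros x Hx. split; [|apply L1; auto].
    specialize (R1 (- x) ltac:(lra)). rewrite Ropp_involutive in R1. lra.
  - apply lim_right. exact L2.
  - apply lim_left. intros eps Heps. destruct (R2 eps Heps) as [d [Hd Hd2]].
    exists d. split; auto. intros x Hx. specialize (Hd2 (- x) ltac:(lra)).
    rewrite Ropp_involutive in Hd2. replace (U x - tau2' c2) with (- (- U x - tau1 c2)).
    rewrite Rabs_Ropp. exact Hd2. unfold tau2', tau1. ring.
Qed.
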